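(* Let $R$ be a commutative local ring whose maximal ideal $\mathfrak{m}$ is principal with $\mathfrak{m}^2 = 0$, and fix a generator $r$ of $\mathfrak{m}$. Let $X$ be a perfect chain complex over $R$. Then there is an isomorphism of chain complexes $X \cong P \oplus Q$, where $P$ is acyclic and $Q$ is isomorphic to a finite direct sum of complexes of the form $\Sigma^i E_j$ with $i, j \geq 0$.
   Context: Chain complexes are non-negatively graded chain complexes of $R$-modules, with differentials lowering degree. A chain complex is perfect if it consists of projective modules in each degree and $\bigoplus_i X_i$ is finitely generated. Acyclic means all homology groups vanish. For integers $i, j \geq 0$, $\Sigma^i E_j$ is the complex with $(\Sigma^i E_j)_n = R$ for $i \leq n \leq i+j$ and $0$ otherwise, with every differential $R \to R$ given by multiplication by $(-1)^i r$ (the isomorphism type does not depend on the choice of $r$). In particular $E_j = \Sigma^0 E_j$ has $R$ in degrees $0, \dots, j$ with differentials multiplication by $r$. *)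

(* Defs.v *)
From HB Require Import structures.
From mathcomp Require Import all_boot all_algebra.
Set Implicit Arguments. Unset Strict Implicit. Unset Printing Implicit Defensive.
Import GRing.Theory.
Local Open Scope ring_scope.

Record gmod (R : comUnitRingType) := GMod {
  gobj :> nat -> lmodType R;
  gd : forall n, gobj n.+1 -> gobj n }.

Definition is_complex (R : comUnitRingType) (X : gmod R) : Prop :=
  (forall n, linear (@gd R X n)) /\
  (forall n (x : X n.+2), gd (gd x) = 0).

Definition projective (R : comUnitRingType) (M : lmodType R) : Prop :=
  forall (A B : lmodType R) (g : A -> B) (f : M -> B),
    linear g -> linear f -> (forall b, exists a, g a = b) ->
    exists h : M -> A, linear h /\ forall m, g (h m) = f m.

(* Component in degree n of a homogeneous element u of \bigoplus_i X_i. *)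
Definition comp_deg (R : comUnitRingType) (X : gmod R) (n : nat)
  (u : {i : nat & X i}) : X n := untag (T_ := fun i => X i) 0 (@id (X n)) u.

(* \bigoplus_i X_i is finitely generated: a finite family of homogeneous
   elements generates it (equivalently, generates each degree n summand). *)
Definition total_fg (R : comUnitRingType) (X : gmod R) : Prop :=
  exists (K : nat) (g : 'I_K -> {i : nat & X i}),
    forall n (x : X n), exists c : 'I_K -> R,
      x = \sum_(k < K) c k *: comp_deg n (g k).

Definition perfect (R : comUnitRingType) (X : gmod R) : Prop :=
  is_complex X /\ (forall n, projective (X n)) /\ total_fg X.

(* All homology groups vanish (H_0 = X_0 / im d_0). *)
Definition acyclic (R : comUnitRingType) (X : gmod R) : Prop :=
  (forall x : X 0, exists y, gd y = x) /\
  (forall n (x : X n.+1), gd x = 0 -> exists y, gd y = x).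

Definition chain_iso (R : comUnitRingType) (X Y : gmod R) : Prop :=
  exists f : forall n, X n -> Y n,
    (forall n, linear (f n)) /\ (forall n, bijective (f n)) /\
    (forall n (x : X n.+1), f n (gd x) = gd (f n.+1 x)).

Definition gsum (R : comUnitRingType) (P Q : gmod R) : gmod R :=
  @GMod R (fun n => (P n * Q n)%type : lmodType R)
    (fun n x => (gd x.1, gd x.2)).

(* Finite direct sum \bigoplus_k Sigma^{i_k} E_{j_k}, for s = [:: (i_k, j_k)]. *)
Definition in_range (ij : nat * nat) (n : nat) : bool :=
  ((ij.1 <= n) && (n <= ij.1 + ij.2))%N.

Definition act (s : seq (nat * nat)) (n : nat) : finType :=
  {k : 'I_(size s) | in_range (nth (0, 0) s k) n}.

Definition sumE_d (R : comUnitRingType) (r : R) (s : seq (nat * nat)) (n : nat)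
  (f : {ffun act s n.+1 -> R^o}) : {ffun act s n -> R^o} :=
  [ffun k : act s n =>
     (match (insub (val k) : option (act s n.+1)) with
      | Some k' => ((-1) ^+ (nth (0, 0) s (val k)).1 * r) * f k'
      | None => 0
      end : R^o)].

Definition sumE (R : comUnitRingType) (r : R) (s : seq (nat * nat)) : gmod R :=
  @GMod R (fun n => ({ffun act s n -> R^o} : lmodType R)) (@sumE_d R r s).

(* R is local: the non-units form an ideal (closed under addition), which is
   then the unique maximal ideal m.  (R is non-trivial as a comUnitRingType.) *)
Definition local_ring (R : comUnitRingType) : Prop :=
  forall x y : R, x \isn't a GRing.unit -> y \isn't a GRing.unit ->
    x + y \isn't a GRing.unit.

Definition in_max_ideal (R : comUnitRingType) (x : R) : bool :=
  x \isn't a GRing.unit.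

(* Main.v *)
Require Import Defs.
From HB Require Import structures.
From mathcomp Require Import all_boot all_algebra.
From mathcomp Require Import ring zify.
From Stdlib Require Import Classical ClassicalEpsilon.
Set Implicit Arguments. Unset Strict Implicit. Unset Printing Implicit Defensive.
Import GRing.Theory.
Local Open Scope ring_scope.

Section Lin.
Variable R : comUnitRingType.
Variables V W : lmodType R.

Definition slin (f : V -> R) := forall a u v, f (a *: u + v) = a * f u + f v.

Section L1.
Variable f : V -> W.
Hypothesis hf : linear f.
Lemma lin0 : f 0 = 0.
Proof.
have h := hf 1 0 0; rewrite !scale1r addr0 in h.
by apply: (addrI (f 0)); rewrite addr0 -h.
Qed.
Lemma linD u v : f (u + v) = f u + f v.
Proof. by have := hf 1 u v; rewrite !scale1r. Qed.
Lemma linZ a u : f (a *: u) = a *: f u.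
Proof. by have := hf a u 0; rewrite addr0 lin0 addr0. Qed.
Lemma linN u : f (- u) = - f u.
Proof. by rewrite -scaleN1r linZ scaleN1r. Qed.
Lemma linB u v : f (u - v) = f u - f v.
Proof. by rewrite linD linN. Qed.
Lemma lin_sum I (rr : seq I) (P : pred I) (F : I -> V) :
  f (\sum_(i <- rr | P i) F i) = \sum_(i <- rr | P i) f (F i).
Proof. exact: (big_morph f linD lin0). Qed.
End L1.

Section L2.
Variable f : V -> R.
Hypothesis hf : slin f.
Lemma slin0 : f 0 = 0.
Proof.
have h := hf 1 0 0; rewrite mul1r scale1r addr0 in h.
by apply: (addrI (f 0)); rewrite addr0 -h.
Qed.
Lemma slinD u v : f (u + v) = f u + f v.
Proof. by have := hf 1 u v; rewrite scale1r mul1r. Qed.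
Lemma slinZ a u : f (a *: u) = a * f u.
Proof. by have := hf a u 0; rewrite addr0 slin0 addr0. Qed.
Lemma slinN u : f (- u) = - f u.
Proof. by rewrite -scaleN1r slinZ mulN1r. Qed.
Lemma slinB u v : f (u - v) = f u - f v.
Proof. by rewrite slinD slinN. Qed.
Lemma slin_sum I (rr : seq I) (P : pred I) (F : I -> V) :
  f (\sum_(i <- rr | P i) F i) = \sum_(i <- rr | P i) f (F i).
Proof. exact: (big_morph f slinD slin0). Qed.
End L2.
End Lin.

Lemma sgsq (R : comUnitRingType) n : (-1) ^+ n * (-1) ^+ n = 1 :> R.
Proof. by rewrite -exprD -signr_odd oddD addbb. Qed.

Section SumE.
Variable R : comUnitRingType.

Definition aof (s : seq (nat * nat)) n (f : {ffun act s n -> R^o}) (k : nat) : R :=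
  match (insub k : option 'I_(size s)) with
  | Some k1 => match (insub k1 : option (act s n)) with Some k2 => f k2 | None => 0 end
  | None => 0 end.

Lemma aofE s n (f : {ffun act s n -> R^o}) (k : act s n) : aof f (val k) = f k.
Proof. by rewrite /aof !valK. Qed.

Lemma aof_out s n (f : {ffun act s n -> R^o}) (k : 'I_(size s)) :
  ~~ in_range (nth (0,0) s k) n -> aof f k = 0.
Proof. by move=> h; rewrite /aof valK insubN. Qed.

Lemma aof_ffun s n (a : nat -> R) (k : 'I_(size s)) :
  in_range (nth (0,0) s k) n ->
  aof ([ffun k' : act s n => a (val k')] : {ffun act s n -> R^o}) k = a k.
Proof.
move=> h; rewrite /aof valK; case: insubP => [k2 _ e2|h2]; first by rewrite ffunE e2.
by rewrite h in h2.
Qed.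

Lemma aof_lin s n (a : R) (f f' : {ffun act s n -> R^o}) (k : nat) :
  aof (a *: f + f') k = a * aof f k + aof f' k.
Proof.
rewrite /aof; case: (insub k) => [k1|]; last by rewrite mulr0 addr0.
by case: (insub k1) => [k2|]; rewrite ?ffunE ?mulr0 ?addr0.
Qed.

Lemma aof_d c s n (f : {ffun act s n.+1 -> R^o}) (k : 'I_(size s)) :
  aof (sumE_d c f) k =
  if in_range (nth (0,0) s k) n && in_range (nth (0,0) s k) n.+1
  then ((-1) ^+ (nth (0,0) s k).1 * c) * aof f k else 0.
Proof.
rewrite /aof valK.
case: insubP => [k2 h2 e2|h2]; last by rewrite (negPf h2).
rewrite h2 /= ffunE e2.
case: insubP => [k3 h3 e3|h3]; last by rewrite (negPf h3).
by rewrite h3.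
Qed.

Lemma sumE_lin c s n : linear (@sumE_d R c s n).
Proof.
move=> a f f'; apply/ffunP => k; rewrite !ffunE.
case: insub => [k'|]; rewrite ?ffunE /=; last by rewrite scaler0 addr0.
have E : forall (b x : R^o), b *: x = b * x by [].
by rewrite !E mulrDr mulrCA.
Qed.


Lemma sumE_dd c s n (f : {ffun act s n.+2 -> R^o}) :
  (forall k, (k < size s)%N -> c * c = 0 \/ (nth (0,0) s k).2 = 1%N) ->
  sumE_d c (sumE_d c f) = 0.
Proof.
move=> h; apply/ffunP => k; rewrite !ffunE.
case: insubP => [k1 h1 e1|]; last by [].
rewrite ffunE; case: insubP => [k2 h2 e2|]; last by rewrite mulr0.
rewrite e1.
have [cc|j1] := h (val k) (ltn_ord _).
  transitivity (((-1) ^+ (nth (0, 0) s (val k)).1 * (-1) ^+ (nth (0, 0) s (val k)).1)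
     * (c * c) * f k2); first by ring.
  by rewrite cc mulr0 mul0r.
have E : sval k1 = sval k := e1.
have := valP k; move: h2 => /=; rewrite E /in_range /= j1 => h2 hk.
exfalso; lia.
Qed.

Definition yv s m (x : {ffun act s m -> R^o}) : {ffun act s m.+1 -> R^o} :=
  [ffun k : act s m.+1 => (-1) ^+ (nth (0,0) s (val k)).1 * aof x (val k)].

Lemma yvE s m (x : {ffun act s m -> R^o}) (k : act s m) :
  in_range (nth (0,0) s (val k)) m.+1 -> sumE_d 1 (yv x) k = x k.
Proof.
move=> h; rewrite ffunE; case: insubP => [k1 h1 e1|hn]; last by rewrite h in hn.
rewrite ffunE e1 aofE mulr1 mulrA sgsq mul1r //.
Qed.

Lemma sumE_acyclic s : (forall k, (k < size s)%N -> (nth (0,0) s k).2 = 1%N) ->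
  acyclic (sumE (1 : R) s).
Proof.
move=> hj; split.
  move=> x; exists (yv x); apply/ffunP => k; rewrite yvE //.
  have := valP k; have := hj (val k) (ltn_ord _); rewrite /in_range /=.
  move=> j1 hk; rewrite j1 in hk *; apply/andP; lia.
move=> n x hx; exists (yv x); apply/ffunP => k.
case: (boolP (in_range (nth (0,0) s (val k)) n.+2)) => h; first by rewrite yvE.
have j1 := hj (val k) (ltn_ord _).
have hk := valP k.
have hn : in_range (nth (0,0) s (val k)) n.
  move: h hk; rewrite /in_range /= j1 => h hk; apply/andP; lia.
pose k0 : act s n := Sub (val k) hn.
have := congr1 (fun F : {ffun act s n -> R^o} => F k0) hx; rewrite /= !ffunE.
rewrite (_ : insub (val k0) = Some k); last by rewrite /k0 SubK valK.
rewrite mulr1 => e.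
rewrite insubN //; move: e; rewrite /k0 SubK => e; apply: esym.
rewrite -[x k]mul1r -(sgsq R (nth (0,0) s (val k)).1) -mulrA e mulr0 //.
Qed.
End SumE.

Section Main.
Variable R : comUnitRingType.
Variable X : gmod R.
Hypothesis dlin : forall n, linear (@gd R X n).
Hypothesis dd : forall n (x : X n.+2), gd (gd x) = 0.

Definition sumV (s : seq (nat * nat)) (V : nat -> forall n, X n) (a : nat -> R) n : X n :=
  \sum_(k < size s | in_range (nth (0,0) s k) n) a k *: V k n.

Definition extV (s : seq (nat * nat)) (V : nat -> forall n, X n) (u : forall n, X n) :=
  fun k => if k == size s then u else V k.

Lemma sumV_rcons s V ij u a n :
  sumV (rcons s ij) (extV s V u) a n =
  sumV s V a n + (if in_range ij n then a (size s) *: u n else 0).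
Proof.
rewrite /sumV size_rcons big_mkcond big_ord_recr /=.
rewrite nth_rcons ltnn eqxx /extV eqxx; congr (_ + _).
rewrite [RHS]big_mkcond; apply: eq_bigr => i _; rewrite nth_rcons /= ltn_ord.
by rewrite (ltn_eqF (ltn_ord i)).
Qed.


Lemma sumV_ext s V a a' n : (forall k, (k < size s)%N -> a k = a' k) ->
  sumV s V a n = sumV s V a' n.
Proof. by move=> h; apply: eq_bigr => k _; rewrite h. Qed.

Lemma sumV0 s V a n :
  (forall k, (k < size s)%N -> in_range (nth (0,0) s k) n -> a k = 0) ->
  sumV s V a n = 0.
Proof. by move=> h; apply: big1 => k hk; rewrite h // scale0r. Qed.

Variable r : R.
Hypothesis hr : r \isn't a GRing.unit.
Hypothesis hgen : forall x : R, x \isn't a GRing.unit -> exists a, x = a * r.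
Hypothesis hrr : r * r = 0.
Variable K : nat.
Variable g : forall n, 'I_K -> X n.
Variable cf : forall n, 'I_K -> X n -> R.
Arguments g : clear implicits.
Arguments cf : clear implicits.
Hypothesis cflin : forall (n : nat) (l : 'I_K), slin (cf n l).
Arguments cflin : clear implicits.
Hypothesis dual : forall n (x : X n), x = \sum_(l < K) cf n l x *: g n l.
Variable N : nat.
Hypothesis bound : forall n, (N < n)%N -> forall x : X n, x = 0.

Definition pieces_ok (c : R) (s : seq (nat*nat)) (V : nat -> forall n, X n) :=
  forall k, (k < size s)%N ->
   (forall n, ((nth (0,0) s k).1 <= n < (nth (0,0) s k).1 + (nth (0,0) s k).2)%N ->
        gd (V k n.+1) = ((-1) ^+ (nth (0,0) s k).1 * c) *: V k n) /\
   (forall m, (nth (0,0) s k).1 = m.+1 -> gd (V k m.+1) = 0).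

Record InvG (p : forall n, X n -> X n) (S : nat -> {set 'I_K})
   sA VA cA sB VB cB : Prop := {
  Ilin : forall n, linear (p n);
  Iidem : forall n x, p n (p n x) = p n x;
  Isub : forall n x, p n (gd (p n.+1 x)) = gd (p n.+1 x);
  Ispan : forall n x, p n x = x ->
     exists a : 'I_K -> R, x = \sum_(l in S n) a l *: p n (g n l);
  IokA : pieces_ok cA sA VA;
  IokB : pieces_ok cB sB VB;
  Idec : forall n x, exists a b, x - p n x = sumV sA VA a n + sumV sB VB b n;
  Iind : forall n a b y, sumV sA VA a n + sumV sB VB b n + p n y = 0 ->
     (forall k, (k < size sA)%N -> in_range (nth (0,0) sA k) n -> a k = 0) /\
     (forall k, (k < size sB)%N -> in_range (nth (0,0) sB k) n -> b k = 0) }.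

Lemma InvG_swap p S sA VA cA sB VB cB :
  InvG p S sA VA cA sB VB cB -> InvG p S sB VB cB sA VA cA.
Proof.
case=> h1 h2 h3 h4 h5 h6 h7 h8; split => //.
  by move=> n x; have [a [b ->]] := h7 n x; exists b, a; rewrite addrC.
move=> n a b y; rewrite (addrC (sumV sB _ _ _)) => /h8 [? ?]; by split.
Qed.

Definition meas (S : nat -> {set 'I_K}) := (\sum_(n < N.+1) #|S n|)%N.

Lemma mult_r (P : pred 'I_K) (F : 'I_K -> R) :
  (forall l, P l -> exists c, F l = c * r) -> exists c, \sum_(l | P l) F l = c * r.
Proof.
move=> h; apply: (big_ind (fun x => exists c, x = c * r)).
- by exists 0; rewrite mul0r.
- by move=> x y [c1 ->] [c2 ->]; exists (c1 + c2); rewrite mulrDl.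
- exact: h.
Qed.

Lemma not_unit_r (c : R) : 1 <> c * r.
Proof. by move=> h; move/negP: hr; apply; apply/unitrPr; exists c; rewrite mulrC. Qed.


Lemma split_step p S sA VA cA sB VB cB (i j : nat) (u : forall n, X n)
    (psi : forall n, X n -> R) :
  InvG p S sA VA cA sB VB cB ->
  (forall n, in_range (i, j) n ->
     [/\ p n (u n) = u n, psi n (u n) = 1 & slin (psi n)]) ->
  (forall n, (i <= n < i + j)%N -> gd (u n.+1) = ((-1) ^+ i * cA) *: u n) ->
  (forall m, i = m.+1 -> gd (u m.+1) = 0) ->
  (forall n, (i <= n < i + j)%N -> forall x, p n.+1 x = x ->
      psi n (gd x) = ((-1) ^+ i * cA) * psi n.+1 x) ->
  (forall n, n = (i + j)%N -> forall x : X n.+1, p n.+1 x = x -> psi n (gd x) = 0) ->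
  exists p' S', InvG p' S' (rcons sA (i, j)) (extV sA VA u) cA sB VB cB /\
    (meas S' < meas S)%N.
Proof.
move=> inv hu h2 h2s h3 h4.
case: (inv) => plin pid psub pspan okA okB pdec pind.
pose p' := fun n (x : X n) =>
  if in_range (i, j) n then p n x - psi n (p n x) *: u n else p n x.
have iin : in_range (i, j) i by rewrite /in_range /= leqnn leq_addr.
have [b hb] := pspan i (u i) (let: And3 h _ _ := hu i iin in h).
have [l0 [l0S l0u]] : exists l0, l0 \in S i /\ b l0 \is a GRing.unit.
  apply: NNPP => hno.
  have [_ psi1 psil] := hu i iin.
  have : 1 = \sum_(l in S i) b l * psi i (p i (g i l)).
    by rewrite -psi1 {1}hb slin_sum //; apply: eq_bigr => l _; rewrite slinZ.
  have [c ->] : exists c, \sum_(l in S i) b l * psi i (p i (g i l)) = c * r.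
    apply: mult_r => l lS.
    have bn : b l \isn't a GRing.unit by apply/negP => bu; apply: hno; exists l.
    have [a ->] := hgen bn; exists (a * psi i (p i (g i l))); by rewrite mulrAC.
  exact: not_unit_r.
have F2 : forall n x, p n (p' n x) = p' n x.
  move=> n x; rewrite /p'; case: ifP => hn; last by rewrite pid.
  have [pu _ _] := hu n hn.
  by rewrite (linB (plin n)) (linZ (plin n)) pid pu.
have F1 : forall n x, in_range (i, j) n -> psi n (p' n x) = 0.
  move=> n x hn; have [pu psu pl] := hu n hn.
  by rewrite /p' hn slinB // slinZ // psu mulr1 subrr.
have F3 : forall n x, p' n (p n x) = p' n x by move=> n x; rewrite /p' pid.
have p'lin : forall n, linear (p' n).
  move=> n a x y; rewrite /p'; case: ifP => hn; last by rewrite (plin n).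
  have [_ _ pl] := hu n hn; rewrite (plin n) pl.
  by rewrite scalerBr scalerA scalerDl opprD addrACA.
pose S' := fun n => if n == i then S i :\ l0 else S n.
exists p', S'; split; first split.
- exact: p'lin.
- move=> n x; rewrite {1}/p' F2; case: ifP => hn //.
  by rewrite F1 // scale0r subr0.
- move=> n x.
  have py : p n.+1 (p' n.+1 x) = p' n.+1 x by rewrite F2.
  have pdy : p n (gd (p' n.+1 x)) = gd (p' n.+1 x) by have := psub n (p' n.+1 x); rewrite py.
  rewrite {1}/p' pdy; case: ifP => hn //.
  have -> : psi n (gd (p' n.+1 x)) = 0; last by rewrite scale0r subr0.
  move: hn; rewrite /in_range /= => /andP [hin]; rewrite leq_eqVlt => /orP [/eqP e | hlt].
    exact: h4.
  rewrite h3 ?hin // F1 ?mulr0 //.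
  by rewrite /in_range /= (leq_trans hin (leqnSn n)) hlt.
- move=> n x hx.
  have px : p n x = x by rewrite -hx F2.
  have [a ha] := pspan n x px.
  have ex : x = \sum_(l in S n) a l *: p' n (g n l).
    rewrite -hx {1}ha (lin_sum (p'lin n)); apply: eq_bigr => l _.
    by rewrite (linZ (p'lin n)) F3.
  rewrite /S'; case: eqP => [eni | _]; last by exists a.
  subst n.
  have [pu psu psl] := hu i iin.
  have h0 : 0 = \sum_(l in S i) b l *: p' i (g i l).
    rewrite -[LHS](_ : p' i (u i) = 0); last by rewrite /p' iin pu psu scale1r subrr.
    rewrite {1}hb (lin_sum (p'lin i)); apply: eq_bigr => l _.
    by rewrite (linZ (p'lin i)) F3.
  rewrite (bigD1 l0) //= in ex; rewrite (bigD1 l0) //= in h0.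
  set P := p' i (g i l0) in ex h0.
  set Sb := \sum_(l in S i | l != l0) b l *: p' i (g i l) in h0.
  have hP : P = - ((b l0)^-1 *: Sb).
    have e : b l0 *: P = - Sb by apply/eqP; rewrite -addr_eq0 eq_sym; apply/eqP.
    by rewrite -scalerN -e scalerA mulVr // scale1r.
  exists (fun l => a l - a l0 * (b l0)^-1 * b l).
  rewrite ex hP [RHS](eq_bigl (fun l => (l \in S i) && (l != l0))); last first.
    by move=> l; rewrite in_setD1 andbC.
  under [RHS]eq_bigr do rewrite scalerBl.
  rewrite sumrB addrC /Sb scalerN scalerA scaler_sumr; congr (_ - _).
  by apply: eq_bigr => l _; rewrite scalerA.
- move=> k; rewrite size_rcons ltnS leq_eqVlt => /orP [/eqP ek | hk].
    rewrite ek nth_rcons ltnn eqxx /extV eqxx /=; split; [exact: h2 | exact: h2s].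
  rewrite nth_rcons hk /extV (ltn_eqF hk); exact: okA.
- exact: okB.
- move=> n x; have [a [b' hab]] := pdec n x.
  exists (fun k => if k == size sA then psi n (p n x) else a k), b'.
  rewrite sumV_rcons eqxx.
  have -> : sumV sA VA (fun k => if k == size sA then psi n (p n x) else a k) n
     = sumV sA VA a n by apply: sumV_ext => k hk; rewrite (ltn_eqF hk).
  rewrite /p'; case: ifP => hn.
    by rewrite opprB addrCA hab addrCA addrA.
  by rewrite addr0 hab.
- move=> n a b' y; rewrite sumV_rcons.
  set T := (if in_range (i, j) n then a (size sA) *: u n else 0).
  move=> h.
  have pT : p n (T + p' n y) = T + p' n y.
    rewrite (linD (plin n)) F2 /T; case: ifP => hn; last by rewrite (lin0 (plin n)).
    by have [pu _ _] := hu n hn; rewrite (linZ (plin n)) pu.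
  have h' : sumV sA VA a n + sumV sB VB b' n + p n (T + p' n y) = 0.
    by rewrite pT addrA (addrAC (sumV sA VA a n)) h.
  have [hA hB] := pind n a b' _ h'.
  split; last exact: hB.
  move=> k; rewrite size_rcons ltnS leq_eqVlt => /orP [/eqP ek | hk].
    rewrite ek nth_rcons ltnn eqxx => hn.
    have [pu psu psl] := hu n hn.
    have : T + p' n y = 0.
      by move: h; rewrite (sumV0 _ hA) (sumV0 _ hB) add0r addr0.
    move/(congr1 (psi n)); rewrite /T hn slinD // slinZ // psu mulr1 F1 // addr0.
    by rewrite slin0.
  rewrite nth_rcons hk; exact: hA.
- have iN : (i < N.+1)%N.
    rewrite ltnS leqNgt; apply/negP => hNi; have [_ psu psl] := hu i iin.
    rewrite (bound hNi (u i)) slin0 // in psu.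
    by move: (oner_neq0 R); rewrite -psu eqxx.
  rewrite /meas (bigD1 (Ordinal iN)) //= [X in (_ < X)%N](bigD1 (Ordinal iN)) //=.
  rewrite /S' eqxx.
  have -> : (\sum_(k < N.+1 | k != Ordinal iN) #|(if val k == i then S i :\ l0 else S k)|
      = \sum_(k < N.+1 | k != Ordinal iN) #|S k|)%N.
    apply: eq_bigr => k hk.
    have -> : (val k == i) = false by apply/negP => /eqP e; move/negP: hk; apply; apply/eqP/val_inj.
    done.
  by rewrite ltn_add2r (cardsD1 l0 (S i)) l0S.
Qed.


Lemma functional (p : forall n, X n -> X n) n (z : X n) :
  linear (p n) -> p n z = z -> ~ (exists y, z = r *: p n y) ->
  exists phi : X n -> R, slin phi /\ phi z = 1.
Proof.
move=> plin pz hz.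
case: (boolP [exists l, cf n l z \is a GRing.unit]) => [/existsP [l hl] | /existsPn hno].
  exists (fun x => (cf n l z)^-1 * cf n l x); split; last by rewrite mulVr.
  by move=> a u v; rewrite (cflin n l) mulrDr mulrCA.
exfalso; apply: hz.
have : forall l, exists a, cf n l z = a * r by move=> l; apply: hgen; exact: hno.
case/fin_all_exists => A hA.
exists (\sum_l A l *: g n l).
rewrite -{1}pz {1}(dual z) !(lin_sum plin) scaler_sumr; apply: eq_bigr => l _.
by rewrite !(linZ plin) hA scalerA mulrC.
Qed.

Lemma top_or_zero (p : forall n, X n -> X n) :
  (forall n x, p n x = 0) \/
  exists T, (exists x : X T, p T x != 0) /\
            (forall n, (T < n)%N -> forall x : X n, p n x = 0).
Proof.
case: (classic (exists n (x : X n), p n x != 0)) => [[n0 [x0 hx0]] | hno]; last first.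
  left=> n x; apply/eqP; case: (boolP (p n x == 0)) => // h; exfalso.
  by apply: hno; exists n, x.
pose qb := fun n => if excluded_middle_informative (exists x : X n, p n x != 0)
                    then true else false.
have qbP : forall n, qb n <-> exists x : X n, p n x != 0.
  by move=> n; rewrite /qb; case: excluded_middle_informative.
have ex : exists n, qb n by exists n0; apply/qbP; exists x0.
have ub : forall n, qb n -> (n <= N)%N.
  move=> n /qbP [x hx]; rewrite leqNgt; apply/negP => hn.
  by move: hx; rewrite (bound hn (p n x)) eqxx.
case: (ex_maxnP ex ub) => T hT hmax; right; exists T; split; first by apply/qbP.
move=> n hn x; apply/eqP; case: (boolP (p n x == 0)) => // h; exfalso.
have : qb n by apply/qbP; exists x.
by move/hmax => hle; move: hn; rewrite ltnNge hle.
Qed.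

Lemma Delta_exists (p : forall n, X n -> X n) :
  (forall n, linear (p n)) -> (forall n x, p n (p n x) = p n x) ->
  (forall t (x : X t.+1), p t.+1 x = x -> exists y, gd x = r *: p t y) ->
  exists Delta : forall t, X t.+1 -> X t, forall t,
    [/\ linear (Delta t), (forall x, p t (Delta t x) = Delta t x) &
        (forall x, p t.+1 x = x -> gd x = r *: Delta t x)].
Proof.
move=> plin pid hb.
have hY : forall t (l : 'I_K), exists y : X t, gd (p t.+1 (g t.+1 l)) = r *: p t y.
  by move=> t l; apply: hb; rewrite pid.
pose Y t l := proj1_sig (constructive_indefinite_description _ (hY t l)).
have HY : forall t l, gd (p t.+1 (g t.+1 l)) = r *: p t (Y t l).
  by move=> t l; exact: (proj2_sig (constructive_indefinite_description _ (hY t l))).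
exists (fun t x => \sum_l cf t.+1 l (p t.+1 x) *: p t (Y t l)).
move=> t; split.
- move=> a x y /=; rewrite (plin t.+1) scaler_sumr -big_split /=.
  by apply: eq_bigr => l _; rewrite (cflin _ l) scalerDl scalerA.
- by move=> x; rewrite (lin_sum (plin t)); apply: eq_bigr => l _; rewrite (linZ (plin t)) pid.
- move=> x px; rewrite -{1}px {1}(dual x) (lin_sum (plin _)) (lin_sum (@dlin _)) scaler_sumr.
  apply: eq_bigr => l _; rewrite (linZ (plin _)) (linZ (@dlin _)) HY px scalerA mulrC -scalerA.
  done.
Qed.


Lemma chain (p : forall n, X n -> X n) (Delta : forall t, X t.+1 -> X t) :
  (forall n, linear (p n)) ->
  (forall t, [/\ linear (Delta t), (forall x, p t (Delta t x) = Delta t x) &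
        (forall x, p t.+1 x = x -> gd x = r *: Delta t x)]) ->
  forall t (v : X t), p t v = v -> ~ (exists y, v = r *: p t y) ->
  exists i (u : forall n, X n) (psi : forall n, X n -> R),
   [/\ (i <= t)%N, u t = v,
     (forall n, (i <= n <= t)%N ->
        [/\ p n (u n) = u n, psi n (u n) = 1 & slin (psi n)]),
     (forall n, (i <= n < t)%N -> gd (u n.+1) = r *: u n /\
          (forall x, p n.+1 x = x -> psi n (gd x) = r * psi n.+1 x))
   & (forall m, i = m.+1 -> gd (u m.+1) = 0)].
Proof.
move=> plin hD; elim=> [|t IH] v pv hv.
  have [phi [phl ph1]] := functional (plin 0%N) pv hv.
  exists 0%N, (dfwith (fun n => 0 : X n) v), (dfwith (fun n (_ : X n) => 0 : R) phi).
  split => //.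
  - by rewrite dfwith_in.
  - by move=> n; rewrite leqn0 => /eqP ->; rewrite !dfwith_in; split.
have [phi [phl ph1]] := functional (plin _) pv hv.
have dout : forall (T : nat -> Type) (f : forall n, T n) (x : T t.+1) n,
    (n <= t)%N -> dfwith f x n = f n.
  move=> T f x n hn; apply: dfwith_out; apply/eqP => e; move: hn; rewrite -e ltnn //.
case: (classic (gd v = 0)) => hdv.
  exists t.+1, (dfwith (fun n => 0 : X n) v), (dfwith (fun n (_ : X n) => 0 : R) phi).
  split => //.
  - by rewrite dfwith_in.
  - by move=> n; rewrite -eqn_leq => /eqP <-; rewrite !dfwith_in; split.
  - by move=> n /andP [h1 h2]; move: (leq_ltn_trans h1 h2); rewrite ltnn.
  - by move=> m [<-]; rewrite dfwith_in.
have [Dl Dp Dd] := hD t.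
pose w := Delta t v.
have hw : gd v = r *: w by rewrite /w Dd.
have pw : p t w = w by rewrite /w Dp.
have nw : ~ (exists y, w = r *: p t y).
  by move=> [y hy]; apply: hdv; rewrite hw hy scalerA hrr scale0r.
have [i [u [psi [hi ut hu hc hs]]]] := IH w pw nw.
have ht : (i <= t <= t)%N by rewrite hi leqnn.
have [put psw psl] := hu t ht.
exists i, (dfwith u v), (dfwith psi (fun y => psi t (Delta t y))).
split.
- exact: (leq_trans hi (leqnSn t)).
- by rewrite dfwith_in.
- move=> n /andP [h1]; rewrite leq_eqVlt ltnS => /orP [/eqP -> | h2].
    rewrite !dfwith_in; split => //; first by rewrite ut in psw.
    by move=> a x y /=; rewrite Dl psl.
  by rewrite !dout //; apply: hu; rewrite h1 h2.
- move=> n /andP [h1]; rewrite ltnS leq_eqVlt => /orP [/eqP -> | h2].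
    rewrite dfwith_in !(dout _ _ _ t (leqnn t)); split; first by rewrite ut hw.
    by move=> x px; rewrite (Dd x px) dfwith_in /= slinZ.
  rewrite !(dout _ _ _ n.+1 h2) !(dout _ _ _ n (ltnW h2)).
  by apply: hc; rewrite h1 h2.
- move=> m hm; rewrite dout; first exact: hs.
  by rewrite -hm.
Qed.

Definition Pj1 (s : seq (nat*nat)) := forall k, (k < size s)%N -> (nth (0,0) s k).2 = 1%N.

Lemma step p S sA VA sB VB :
  InvG p S sA VA 1 sB VB r -> Pj1 sA ->
  (forall n x, p n x = 0) \/
  exists p' S' sA' VA' sB' VB',
    [/\ InvG p' S' sA' VA' 1 sB' VB' r, Pj1 sA' & (meas S' < meas S)%N].
Proof.
move=> inv pj.
have [plin pid psub _ _ _ _ _] := inv.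
case: (top_or_zero p) => [hz | [T [[x0 hx0] htop]]]; [by left | right].
case: (classic (exists t (x : X t.+1), p t.+1 x = x /\ ~ (exists y, gd x = r *: p t y))).
  move=> [t [x [px hx]]].
  have pdx : p t (gd x) = gd x by have := psub t x; rewrite px.
  have [phi [phl ph1]] := functional (plin t) pdx hx.
  pose e := (-1) ^+ t : R.
  pose u := dfwith (dfwith (fun n => 0 : X n) (e *: gd x)) x.
  pose psi := dfwith (dfwith (fun n (_ : X n) => 0 : R) (fun y : X t => e * phi y))
                (fun y : X t.+1 => phi (gd y)).
  have nS : t.+1 != t by rewrite eq_sym ltn_eqF ?ltnSn.
  have ut1 : u t.+1 = x by rewrite /u dfwith_in.
  have ut : u t = e *: gd x by rewrite /u dfwith_out ?dfwith_in.
  have psi1 : psi t.+1 = (fun y => phi (gd y)) by rewrite /psi dfwith_in.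
  have psit : psi t = (fun y => e * phi y) by rewrite /psi dfwith_out ?dfwith_in.
  have hu : forall n, in_range (t, 1%N) n ->
      [/\ p n (u n) = u n, psi n (u n) = 1 & slin (psi n)].
    move=> n; rewrite /in_range /= addn1 => /andP [h1]; rewrite leq_eqVlt ltnS.
    case/orP => [/eqP -> | h2].
      rewrite ut1 psi1; split => //.
      by move=> a y z; rewrite /= (@dlin _) phl.
    have -> : n = t by apply/eqP; rewrite eqn_leq h1 h2.
    rewrite ut psit; split.
    - by rewrite (linZ (plin t)) pdx.
    - by rewrite slinZ // ph1 mulr1 sgsq.
    - by move=> a y z; rewrite /= phl mulrDr mulrCA.
  have h2 : forall n, (t <= n < t + 1)%N -> gd (u n.+1) = ((-1) ^+ t * 1) *: u n.
    move=> n; rewrite addn1 ltnS -eqn_leq => /eqP <-.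
    by rewrite ut1 ut scalerA mulr1 sgsq scale1r.
  have h2s : forall m, t = m.+1 -> gd (u m.+1) = 0.
    by move=> m e'; subst t; rewrite ut (linZ (@dlin _)) dd scaler0.
  have h3 : forall n, (t <= n < t + 1)%N -> forall y, p n.+1 y = y ->
      psi n (gd y) = ((-1) ^+ t * 1) * psi n.+1 y.
    by move=> n; rewrite addn1 ltnS -eqn_leq => /eqP <- y py; rewrite psit psi1 mulr1.
  have h4 : forall n, n = (t + 1)%N -> forall y : X n.+1, p n.+1 y = y -> psi n (gd y) = 0.
    by move=> n; rewrite addn1 => -> y py; rewrite psi1 /= dd (slin0 phl).
  have [p' [S' [inv' hm]]] := split_step inv hu h2 h2s h3 h4.
  exists p', S', (rcons sA (t, 1%N)), (extV sA VA u), sB, VB; split => //.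
  move=> k; rewrite size_rcons ltnS leq_eqVlt => /orP [/eqP -> | hk].
    by rewrite nth_rcons ltnn eqxx.
  by rewrite nth_rcons hk; apply: pj.
move=> hb.
have hb' : forall t (x : X t.+1), p t.+1 x = x -> exists y, gd x = r *: p t y.
  move=> t x px; apply: NNPP => hn; apply: hb; by exists t, x.
have [Delta hD] := Delta_exists plin pid hb'.
have [v [pv hv]] : exists v : X T, p T v = v /\ ~ (exists y, v = r *: p T y).
  case: (classic (exists y, p T x0 = r *: p T y)) => [[y hy] | hn]; last first.
    by exists (p T x0); split; [exact: pid|].
  exists (p T y); split; first exact: pid.
  by move=> [z hz]; move: hx0; rewrite hy hz scalerA hrr scale0r eqxx.
have [i [u [psi [hi ut hu hc hs]]]] := chain plin hD pv hv.
pose e := (-1) ^+ i : R.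
pose u' := fun n => (e ^+ n) *: u n : X n.
pose psi' := fun n (y : X n) => e ^+ n * psi n y.
have hu' : forall n, in_range (i, (T - i)%N) n ->
    [/\ p n (u' n) = u' n, psi' n (u' n) = 1 & slin (psi' n)].
  move=> n; rewrite /in_range /= subnKC // => hn; have [pu psu psl] := hu n hn.
  split.
  - by rewrite (linZ (plin n)) pu.
  - by rewrite /psi' /u' slinZ // psu mulr1 -exprMn sgsq expr1n.
  - by move=> a y z; rewrite /psi' psl mulrDr mulrCA.
have h2' : forall n, (i <= n < i + (T - i))%N -> gd (u' n.+1) = ((-1) ^+ i * r) *: u' n.
  move=> n; rewrite subnKC // => hn; have [hd _] := hc n hn.
  rewrite /u' (linZ (@dlin _)) hd !scalerA exprS; congr (_ *: _).
  rewrite /e; ring.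
have h2s' : forall m, i = m.+1 -> gd (u' m.+1) = 0.
  by move=> m hm; rewrite /u' (linZ (@dlin _)) hs // scaler0.
have h3' : forall n, (i <= n < i + (T - i))%N -> forall y, p n.+1 y = y ->
    psi' n (gd y) = ((-1) ^+ i * r) * psi' n.+1 y.
  move=> n; rewrite subnKC // => hn y py; have [_ hp] := hc n hn; rewrite /psi' hp // exprS.
  transitivity ((e * e) * (e ^+ n * (r * psi n.+1 y))); first by rewrite sgsq mul1r.
  rewrite /e; ring.
have h4' : forall n, n = (i + (T - i))%N -> forall y : X n.+1, p n.+1 y = y ->
    psi' n (gd y) = 0.
  move=> n; rewrite subnKC // => -> y py.
  have hT : (i <= T <= T)%N by rewrite hi leqnn.
  have [_ _ psl] := hu T hT.
  by rewrite -py htop // (lin0 (@dlin _)) /psi' (slin0 psl) mulr0.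
have [p' [S' [inv' hm]]] := split_step (InvG_swap inv) hu' h2' h2s' h3' h4'.
exists p', S', sA, VA, (rcons sB (i, (T - i)%N)), (extV sB VB u'); split => //.
exact: InvG_swap inv'.
Qed.

Lemma reduce m : forall p S sA VA sB VB,
  InvG p S sA VA 1 sB VB r -> Pj1 sA -> (meas S <= m)%N ->
  exists p' S' sA' VA' sB' VB',
    [/\ InvG p' S' sA' VA' 1 sB' VB' r, Pj1 sA' & forall n x, p' n x = 0].
Proof.
elim: m => [|m IH] p S sA VA sB VB inv pj hm;
  (case: (step inv pj) => [hz | [p' [S' [sA' [VA' [sB' [VB' [inv' pj' hlt]]]]]]]];
   first by exists p, S, sA, VA, sB, VB).
  by move: (leq_trans hlt hm); rewrite ltn0.
apply: (IH _ _ _ _ _ _ inv' pj'); rewrite -ltnS; exact: (leq_trans hlt hm).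
Qed.


Lemma sumV_d c s V n (f : {ffun act s n.+1 -> R^o}) : pieces_ok c s V ->
  sumV s V (aof (sumE_d c f)) n = gd (sumV s V (aof f) n.+1).
Proof.
move=> ok; rewrite /sumV (lin_sum (@dlin _)) big_mkcond [RHS]big_mkcond.
apply: eq_bigr => k _; rewrite aof_d.
have [hi hs] := ok k (ltn_ord k).
case h0: (in_range (nth (0,0) s k) n); case h1: (in_range (nth (0,0) s k) n.+1) => /=.
- rewrite (linZ (@dlin _)) hi; first by rewrite scalerA mulrC.
  by move: h0 h1; rewrite /in_range; case: (nth (0,0) s k) => i0 j0 /=; lia.
- by rewrite scale0r.
- rewrite (linZ (@dlin _)) (hs n) ?scaler0 //.
  by move: h0 h1; rewrite /in_range; case: (nth (0,0) s k) => i0 j0 /=; lia.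
- done.
Qed.

Lemma sumV_lin s V n (a b : nat -> R) c :
  sumV s V (fun k => c * a k + b k) n = c *: sumV s V a n + sumV s V b n.
Proof.
rewrite /sumV scaler_sumr -big_split; apply: eq_bigr => k _.
by rewrite scalerDl scalerA.
Qed.

Lemma sumV_sub s V n (a b : nat -> R) :
  sumV s V (fun k => a k - b k) n = sumV s V a n - sumV s V b n.
Proof.
rewrite /sumV -sumrB; apply: eq_bigr => k _; by rewrite scalerBl.
Qed.

End Main.

Lemma iso_rev (R : comUnitRingType) (Y Z : gmod R) (h : forall n, Z n -> Y n) :
  (forall n, linear (h n)) -> (forall n (y : Y n), exists z, h n z = y) ->
  (forall n, injective (h n)) ->
  (forall n (z : Z n.+1), h n (gd z) = gd (h n.+1 z)) -> chain_iso Y Z.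
Proof.
move=> hl hs hi hc.
pose gi n y := proj1_sig (constructive_indefinite_description _ (hs n y)).
have hg : forall n y, h n (gi n y) = y.
  by move=> n y; exact: (proj2_sig (constructive_indefinite_description _ (hs n y))).
exists gi; split; [|split].
- by move=> n a y1 y2; apply: (hi n); rewrite hg (hl n) !hg.
- by move=> n; exists (h n) => [y|z]; [exact: hg | apply: (hi n); rewrite hg].
- by move=> n y; apply: (hi n); rewrite hg hc hg.
Qed.

Lemma iso_id (R : comUnitRingType) (Y : gmod R) : chain_iso Y Y.
Proof.
exists (fun n (y : Y n) => y); split; [|split] => //.
by move=> n; exists id.
Qed.



Lemma sumV_aof_lin (R : comUnitRingType) (X : gmod R) s (V : nat -> forall n, X n) n
   (a : R) (f f' : {ffun act s n -> R^o}) :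
  sumV s V (aof (a *: f + f')) n = a *: sumV s V (aof f) n + sumV s V (aof f') n.
Proof. by rewrite -sumV_lin; apply: sumV_ext => k _; exact: aof_lin. Qed.

Lemma sumV_aof_ffun (R : comUnitRingType) (X : gmod R) s (V : nat -> forall n, X n) n
   (a : nat -> R) :
  sumV s V (aof ([ffun k : act s n => a (val k)] : {ffun act s n -> R^o})) n = sumV s V a n.
Proof. by apply: eq_bigr => k hk; rewrite aof_ffun. Qed.

Theorem lemma5p2 (R : comUnitRingType) (hloc : local_ring R) (r : R)
  (hr : in_max_ideal r)
  (hgen : forall x : R, in_max_ideal x -> exists a : R, x = a * r)
  (hsq : forall x y : R, in_max_ideal x -> in_max_ideal y -> x * y = 0)
  (X : gmod R) (hX : perfect X) :
  exists P Q : gmod R,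
    [/\ is_complex P, is_complex Q, acyclic P,
        (exists s : seq (nat * nat), chain_iso Q (sumE r s))
      & chain_iso X (gsum P Q)].
Proof.
have hrr : r * r = 0 by apply: hsq.
case: hX => [[dlin dd] [hproj [K [G hG]]]].
pose g n (l : 'I_K) := comp_deg n (G l).
pose N := (\max_(l < K) tag (G l))%N.
have bound : forall n, (N < n)%N -> forall x : X n, x = 0.
  move=> n hn x; have [c ->] := hG n x.
  apply: big1 => l _.
  rewrite /comp_deg untag_dflt ?scaler0 //.
  apply/eqP => e; move: hn; rewrite -e ltnNge.
  by rewrite /N (leq_bigmax (F := fun l => tag (G l)) l).
have hdual : forall n, exists cfn : 'I_K -> X n -> R,
    (forall l, slin (cfn l)) /\ forall x : X n, x = \sum_(l < K) cfn l x *: g n l.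
  move=> n.
  pose pi := fun f : {ffun 'I_K -> R^o} => \sum_(l < K) f l *: g n l.
  have pil : linear pi.
    move=> a f f'; rewrite /pi scaler_sumr -big_split; apply: eq_bigr => l _.
    by rewrite !ffunE scalerDl scalerA.
  have pis : forall x : X n, exists f, pi f = x.
    move=> x; have [c hc] := hG n x; exists [ffun l => c l]; rewrite hc /pi.
    by apply: eq_bigr => l _; rewrite ffunE.
  have idl : linear (fun x : X n => x) by [].
  have [h [hl hh]] := hproj n _ _ pi (fun x => x) pil idl pis.
  exists (fun l x => h x l); split.
  - by move=> l a u v /=; rewrite hl !ffunE.
  - by move=> x; rewrite -{1}(hh x).
pose cf n := proj1_sig (constructive_indefinite_description _ (hdual n)).
have hcf : forall n, (forall l, slin (cf n l)) /\ forall x : X n, x = \sum_(l < K) cf n l x *: g n l.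
  by move=> n; exact: (proj2_sig (constructive_indefinite_description _ (hdual n))).
have cflin : forall n l, slin (cf n l) by move=> n l; case: (hcf n).
have dual : forall n (x : X n), x = \sum_(l < K) cf n l x *: g n l by move=> n; case: (hcf n).
pose V0 := fun (_ : nat) (n : nat) => (0 : X n).
have inv0 : InvG g (fun n (x : X n) => x) (fun _ => [set: 'I_K]) [::] V0 1 [::] V0 r.
  split => //.
  - move=> n x _; exists (fun l => cf n l x); rewrite {1}(dual n x).
    by apply: eq_bigl => l; rewrite in_setT.
  - by move=> n x; exists (fun _ => 0), (fun _ => 0); rewrite subrr /sumV !big_ord0 addr0.
have pj0 : Pj1 [::] by move=> k.
have [p' [S' [sA [VA [sB [VB [inv pj hz]]]]]]] :=
  reduce dlin dd hr hgen hrr cflin dual bound inv0 pj0 (leqnn _).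
have [plin _ _ _ okA okB dec ind] := inv.
pose h n (pq : gsum (sumE 1 sA) (sumE r sB) n) : X n :=
  sumV sA VA (aof pq.1) n + sumV sB VB (aof pq.2) n.
exists (sumE 1 sA), (sumE r sB); split.
- split; first by move=> n; exact: sumE_lin.
  by move=> n x; apply: sumE_dd => k hk; right; exact: pj.
- split; first by move=> n; exact: sumE_lin.
  by move=> n x; apply: sumE_dd => k hk; left.
- exact: sumE_acyclic.
- by exists sB; exact: iso_id.
apply: (@iso_rev _ _ _ h).
- move=> n a [f1 f2] [f1' f2']; rewrite /h /=.
  rewrite !sumV_aof_lin scalerDr addrACA //.
- move=> n x; have [a [b hab]] := dec n x.
  exists ([ffun k : act sA n => a (val k)], [ffun k : act sB n => b (val k)]).
  by rewrite /h /= !sumV_aof_ffun -hab hz subr0.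
- move=> n [f1 f2] [f1' f2']; rewrite /h /= => e.
  have e' : sumV sA VA (fun k => aof f1 k - aof f1' k) n +
            sumV sB VB (fun k => aof f2 k - aof f2' k) n + p' n 0 = 0.
    rewrite hz addr0 !sumV_sub addrACA -opprD e subrr //.
  have [hA hB] := ind n _ _ _ e'.
  congr pair; apply/ffunP => k.
  + have := hA (val k) (ltn_ord _) (valP k); rewrite !aofE => /eqP.
    by rewrite subr_eq0 => /eqP.
  + have := hB (val k) (ltn_ord _) (valP k); rewrite !aofE => /eqP.
    by rewrite subr_eq0 => /eqP.
- move=> n [f1 f2]; rewrite /h /=.
  by rewrite (sumV_d dlin hr _ okA) (sumV_d dlin hr _ okB) (linD (@dlin _)).
Qed.
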